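(* Let $G$ be a graph of order $n$ with maximum degree $\Delta\ge 1$. Then $$\gamma_{rdR}(G)\ge \frac{2n+(\Delta-2)\gamma_r(G)}{\Delta}.$$ Moreover, the bound is sharp: for every integer $\Delta\ge 4$ there is a graph with maximum degree $\Delta$ attaining equality.
   Context: All graphs are finite and simple. An RDRD function of $G$ is a function $f:V(G)\to\{0,1,2,3\}$ such that every vertex with value $0$ has at least two neighbors with value $2$ or at least one neighbor with value $3$, every vertex with value $1$ has a neighbor with value $2$ or $3$, and the subgraph induced by the vertices with value $0$ has no isolated vertices; $\gamma_{rdR}(G)$ is the minimum of $\sum_v f(v)$ over RDRD functions. A restrained dominating set of $G$ is a set $S\subseteq V(G)$ such that every vertex of $V(G)\setminus S$ has a neighbor in $S$ and a neighbor in $V(G)\setminus S$; $\gamma_r(G)$ is the minimum cardinality of such a set. *)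

(* Defs.v *)
From mathcomp Require Import all_boot all_order all_algebra.
Set Implicit Arguments. Unset Strict Implicit. Unset Printing Implicit Defensive.

Definition simple_graph (T : finType) (e : rel T) : Prop :=
  irreflexive e /\ symmetric e.

Definition maxdeg (T : finType) (e : rel T) : nat :=
  \max_(v : T) #|[set u | e v u]|.

Definition restrained_dom (T : finType) (e : rel T) (S : {set T}) : bool :=
  [forall v, (v \notin S) ==>
     ([exists u, (u \in S) && e v u] && [exists u, (u \notin S) && e v u])].

(* gamma_r: minimum size of a restrained dominating set (V(G) itself is one) *)
Definition gamma_r (T : finType) (e : rel T) : nat :=
  \big[minn/#|T|]_(S : {set T} | restrained_dom e S) #|S|.

Definition is_RDRD (T : finType) (e : rel T) (f : {ffun T -> 'I_4}) : bool :=
  [forall v,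
    [&& ((f v : nat) == 0) ==>
          ((2 <= #|[set u | e v u & (f u : nat) == 2]|)
           || [exists u, e v u && ((f u : nat) == 3)]),
        ((f v : nat) == 1) ==> [exists u, e v u && (2 <= (f u : nat))]
      & ((f v : nat) == 0) ==> [exists u, e v u && ((f u : nat) == 0)]]].

Definition weight (T : finType) (f : {ffun T -> 'I_4}) : nat :=
  \sum_(v : T) (f v : nat).

(* gamma_rdR: minimum weight of an RDRD function (the constant 2 is one) *)
Definition gamma_rdR (T : finType) (e : rel T) : nat :=
  \big[minn/(2 * #|T|)]_(f : {ffun T -> 'I_4} | is_RDRD e f) weight f.

(* Main.v *)
Require Import Defs.
From mathcomp Require Import all_boot all_order all_algebra.
From mathcomp Require Import zify.
Import Order.TTheory GRing.Theory Num.Theory.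
From mathcomp Require Import ring lra.

Section P1.
Variables (T : finType) (e : rel T).
Hypothesis Hs : simple_graph e.

Lemma deg_le v : #|[set u | e v u]| <= maxdeg e.
Proof. rewrite /maxdeg; exact: (@leq_bigmax T (fun v => #|[set u | e v u]|) v). Qed.

Lemma bigmin_le (I : eqType) (r : seq I) (P : pred I) (F : I -> nat) d i :
  i \in r -> P i -> \big[minn/d]_(j <- r | P j) F j <= F i.
Proof.
elim: r => // x r IH; rewrite inE big_cons => /orP[/eqP<-|Hi] Pi.
  by rewrite Pi geq_minl.
case: (P x); last exact: IH.
exact: leq_trans (geq_minr _ _) (IH Hi Pi).
Qed.

Lemma gr_le S : restrained_dom e S -> gamma_r e <= #|S|.
Proof. by move=> HS; exact: bigmin_le (mem_index_enum _) HS. Qed.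

Lemma gr_leT : gamma_r e <= #|T|.
Proof.
apply: (big_ind (fun x => x <= #|T|)) => //.
  by move=> x y Hx _; apply: leq_trans (geq_minl x y) Hx.
by move=> S _; apply: max_card.
Qed.

Lemma card_sum (P : pred T) : #|[set u | P u]| = \sum_u (P u : nat).
Proof.
rewrite -sum1_card big_mkcond /=; apply: eq_bigr => u _.
by rewrite inE; case: (P u).
Qed.

Definition cc (f : {ffun T -> 'I_4}) (v : T) : nat :=
  ((f v : nat) == 2) + 2 * ((f v : nat) == 3).

Lemma charge f : is_RDRD e f ->
  2 * #|[set v | (f v : nat) == 0]| <= maxdeg e * \sum_v cc f v.
Proof.
move=> /forallP Hf.
have step1 : 2 * #|[set v | (f v : nat) == 0]| <=
             \sum_v \sum_u (e v u) * cc f u.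
  rewrite card_sum big_distrr /=; apply: leq_sum => v _.
  case Z: ((f v : nat) == 0); last by rewrite muln0.
  rewrite muln1.
  move/and3P: (Hf v) => [/implyP/(_ Z) /orP[H2|/existsP[u0 /andP[Hu0 Hu3]]] _ _].
  - apply: leq_trans H2 _; rewrite card_sum; apply: leq_sum => u _.
    rewrite /cc; case: (e v u); case: ((f u : nat) == 2) => //=; lia.
  - rewrite (bigD1 u0) //= Hu0 /cc (eqP Hu3) /=; lia.
rewrite (leq_trans step1) // exchange_big /= big_distrr /=.
apply: leq_sum => u _.
rewrite -big_distrl /= leq_mul2r; apply/orP; right.
apply: leq_trans (deg_le u); rewrite card_sum; apply/eq_leq/eq_bigr => v _.
by case: Hs => _ Hsym; rewrite Hsym.
Qed.

Lemma two_nb v u1 u2 : u1 != u2 -> e v u1 -> e v u2 -> 2 <= #|[set u | e v u]|.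
Proof.
move=> H12 H1 H2; have <- : #|[set u1; u2]| = 2 by rewrite cards2 H12.
apply: subset_leq_card.
by apply/subsetP => u; rewrite !inE => /orP[]/eqP->.
Qed.

Lemma restr_S0 f : is_RDRD e f -> restrained_dom e [set v | (f v : nat) != 0].
Proof.
move=> /forallP Hf; apply/forallP => v; apply/implyP; rewrite inE negbK => Z.
move/and3P: (Hf v) => [/implyP/(_ Z) H1 _ /implyP/(_ Z) /existsP[u /andP[Hu Hu0]]].
apply/andP; split; last by apply/existsP; exists u; rewrite inE Hu0 Hu.
case/orP: H1 => [H2|/existsP[u0 /andP[Hv0 Hu3]]].
  have : 0 < #|[set u | e v u & (f u : nat) == 2]| by apply: leq_trans H2.
  rewrite card_gt0 => /set0Pn[w]; rewrite inE => /andP[Hw Hw2].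
  by apply/existsP; exists w; rewrite inE (eqP Hw2) Hw.
by apply/existsP; exists u0; rewrite inE (eqP Hu3) Hv0.
Qed.

Lemma weight_split (f : {ffun T -> 'I_4}) : weight f = \sum_v ((f v : nat) != 0) + \sum_v cc f v.
Proof.
rewrite /weight -big_split /=; apply: eq_bigr => v _; rewrite /cc.
by case: (f v) => [[|[|[|[|k]]]] Hk].
Qed.

Lemma card_split (f : {ffun T -> 'I_4}) : #|T| = \sum_v ((f v : nat) != 0) + #|[set v : T | (f v : nat) == 0]|.
Proof.
rewrite card_sum -big_split /= -sum1_card; apply: eq_bigr => v _.
by case: ((f v : nat) == 0).
Qed.

Lemma deg1_gr : maxdeg e <= 1 -> #|T| <= gamma_r e.
Proof.
move=> HD; apply: (big_ind (fun x => #|T| <= x)) => //.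
  by move=> x y Hx Hy; rewrite leq_min Hx Hy.
move=> S /forallP HS; suff -> : S = setT by rewrite cardsT.
apply/setP => v; rewrite inE; apply/negP => /negP Hv.
move/implyP: (HS v) => /(_ Hv) /andP[/existsP[u1 /andP[H1 E1]] /existsP[u2 /andP[H2 E2]]].
have : 2 <= #|[set u | e v u]|.
  apply: (@two_nb v u1 u2 _ E1 E2); apply/negP => /eqP Heq; by move: H2; rewrite -Heq H1.
by move=> H; have := leq_trans H (leq_trans (deg_le v) HD).
Qed.

Lemma deg1_w f : is_RDRD e f -> maxdeg e <= 1 -> #|T| <= weight f.
Proof.
move=> /forallP Hf HD; rewrite -sum1_card /weight; apply: leq_sum => v _.
rewrite lt0n; apply/negP => Z.
move/and3P: (Hf v) => [/implyP/(_ Z) H1 _ /implyP/(_ Z) /existsP[u /andP[Hu Hz]]].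
suff : 2 <= #|[set u | e v u]| by move=> H; have := leq_trans H (leq_trans (deg_le v) HD).
case/orP: H1 => [H2|/existsP[u0 /andP[Hu0' Hu3]]].
  apply: leq_trans H2 _; apply: subset_leq_card; apply/subsetP => w.
  by rewrite !inE => /andP[].
apply: (@two_nb v u u0 _ Hu Hu0'); apply/negP => /eqP Heq; by move: Hz; rewrite Heq (eqP Hu3).
Qed.

Lemma main_f f : is_RDRD e f -> 1 <= maxdeg e ->
  2 * #|T| + maxdeg e * gamma_r e <= maxdeg e * weight f + 2 * gamma_r e.
Proof.
move=> Hf HD.
have gT := gr_leT.
case: (leqP (maxdeg e) 1) => HD1.
  have g1 := deg1_gr HD1; have w1 := deg1_w f Hf HD1.
  have -> : maxdeg e = 1 by apply/eqP; rewrite eqn_leq HD1 HD.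
  lia.
have Hc := charge f Hf.
have Hg := gr_le _ (restr_S0 f Hf); rewrite card_sum in Hg.
rewrite weight_split (card_split f).
move: Hc Hg HD1.
set m := \sum_v _; set C := \sum_v _; set Z := #|_|; set D := maxdeg e; set g := gamma_r e.
move=> *; nia.
Qed.

End P1.

Lemma main_nat (T : finType) (e : rel T) : simple_graph e -> 1 <= maxdeg e ->
  2 * #|T| + maxdeg e * gamma_r e <= maxdeg e * gamma_rdR e + 2 * gamma_r e.
Proof.
move=> Hs HD; have gT := @gr_leT T e.
apply: (big_ind (fun x => 2 * #|T| + maxdeg e * gamma_r e <= maxdeg e * x + 2 * gamma_r e)).
- move: gT HD; set g := gamma_r e; set D := maxdeg e; move=> *; nia.
- by move=> x y Hx Hy; rewrite /minn; case: ifP.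
- by move=> f Hf; apply: main_f.
Qed.

Section Wheel.
Variable D : nat.
Hypothesis HD : 4 <= D.

Lemma succmod j : j < D -> j.+1 %% D = (if j.+1 == D then 0 else j.+1).
Proof.
move=> Hj; case: eqP => [->|H]; first by rewrite modnn.
by rewrite modn_small // ltn_neqAle Hj andbT; apply/eqP.
Qed.

Definition cyc (i j : 'I_D) : bool :=
  ((j : nat) == i.+1 %% D) || ((i : nat) == j.+1 %% D).

Definition we (x y : option 'I_D) : bool :=
  match x, y with
  | Some i, Some j => cyc i j
  | None, None => false
  | _, _ => true
  end.

Lemma we_simple : simple_graph we.
Proof.
split.
  move=> [i|] //=; rewrite /cyc succmod // orbb.
  apply/eqP; have := ltn_ord i; case: eqP => ? ?; lia.
by move=> [i|] [j|] //=; rewrite /cyc orbC.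
Qed.

Lemma D0 : 0 < D. Proof. lia. Qed.

Definition nxt (i : 'I_D) : 'I_D := Ordinal (ltn_pmod i.+1 D0).

Lemma cyc_nxt i : cyc i (nxt i).
Proof. by rewrite /cyc /= eqxx. Qed.

Definition prv (i : 'I_D) : 'I_D := Ordinal (ltn_pmod (i + D.-1) D0).

Lemma deg_some i : #|[set u | we (Some i) u]| <= 3.
Proof.
apply: (@leq_trans #|[set None; Some (nxt i); Some (prv i)]|).
  apply: subset_leq_card; apply/subsetP => [[j|]]; rewrite !inE //= /cyc.
  have Hi := ltn_ord i; have Hj := ltn_ord j.
  case/orP => /eqP H.
    by apply/orP; left; apply/eqP; congr Some; apply: val_inj.
  apply/orP; right; apply/eqP; congr Some; apply: val_inj => /=.
  move: H; rewrite succmod //.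
  case: eqP => E H.
    rewrite H add0n modn_small; lia.
  rewrite H.
  have -> : j.+1 + D.-1 = j + D by lia.
  by rewrite modnDr modn_small.
rewrite ?cardsU1 ?cardsU ?cards1; lia.
Qed.

Lemma deg_none : #|[set u | we None u]| = D.
Proof.
have -> : [set u | we None u] = [set~ None].
  by apply/setP => [[i|]]; rewrite !inE.
by rewrite cardsC1 card_option card_ord.
Qed.

Lemma we_maxdeg : maxdeg we = D.
Proof.
apply/eqP; rewrite eqn_leq; apply/andP; split.
  apply/bigmax_leqP => [[i|]] _; last by rewrite deg_none.
  by apply: leq_trans (deg_some i) _; lia.
by rewrite /maxdeg -{1}deg_none (@leq_bigmax _ (fun v => #|[set u | we v u]|) None).
Qed.

Definition o3 : 'I_4 := Ordinal (isT : 3 < 4).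
Definition o0 : 'I_4 := Ordinal (isT : 0 < 4).
Definition fw : {ffun option 'I_D -> 'I_4} :=
  [ffun x => if x is None then o3 else o0].

Lemma fw_RDRD : is_RDRD we fw.
Proof.
apply/forallP => [[i|]]; rewrite !ffunE //=.
apply/andP; split.
  by apply/orP; right; apply/existsP; exists None; rewrite ffunE.
by apply/existsP; exists (Some (nxt i)); rewrite ffunE /= cyc_nxt.
Qed.

Lemma fw_weight : weight fw = 3.
Proof.
rewrite /weight (bigD1 None) //= ffunE /= big1 // => [[i|]] //= _.
by rewrite ffunE.
Qed.

Lemma we_rdR_le : gamma_rdR we <= 3.
Proof. rewrite -fw_weight; exact: bigmin_le (mem_index_enum _) fw_RDRD. Qed.

Lemma we_r : gamma_r we = 1.
Proof.
apply/eqP; rewrite eqn_leq; apply/andP; split.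
  rewrite -(cards1 (None : option 'I_D)); apply: gr_le.
  apply/forallP => [[i|]]; apply/implyP; rewrite !inE //= => _.
  apply/andP; split; first by apply/existsP; exists None; rewrite !inE.
  by apply/existsP; exists (Some (nxt i)); rewrite !inE /= cyc_nxt.
apply: (big_ind (fun x => 0 < x)).
- by rewrite card_option.
- by move=> x y; rewrite leq_min => -> ->.
- move=> S /forallP HS; rewrite card_gt0; apply/negP => /eqP S0.
  move: (HS None); rewrite S0 inE /= => /andP[/existsP[u]].
  by rewrite inE.
Qed.

Lemma we_rdR : gamma_rdR we = 3.
Proof.
apply/eqP; rewrite eqn_leq we_rdR_le /=.
have := @main_nat _ we we_simple; rewrite we_maxdeg we_r card_option card_ord.
move=> /(_ (leq_trans (isT : 1 <= 4) HD)) H.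
move: (gamma_rdR we) H => x H; nia.
Qed.
End Wheel.

Local Open Scope ring_scope.

Theorem theorem2p4 :
  (forall (T : finType) (e : rel T), simple_graph e -> (1 <= maxdeg e)%N ->
     (gamma_rdR e)%:R >=
       (2 * #|T|%:R + ((maxdeg e)%:R - 2) * (gamma_r e)%:R) / (maxdeg e)%:R
       :> rat)
  /\
  (forall D : nat, (4 <= D)%N ->
     exists (T : finType) (e : rel T), simple_graph e /\ maxdeg e = D /\
       (gamma_rdR e)%:R =
         (2 * #|T|%:R + ((maxdeg e)%:R - 2) * (gamma_r e)%:R) / (maxdeg e)%:R
         :> rat).
Proof.
split.
  move=> T e Hs HD.
  have H := @main_nat T e Hs HD.
  have HDr : (0 : rat) < (maxdeg e)%:R by rewrite ltr0n.
  rewrite ler_pdivrMr //.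
  have := H; rewrite -(ler_nat rat) !natrD !natrM.
  move: HDr; set a := (maxdeg e)%:R; set b := (gamma_r e)%:R;
  set c := (gamma_rdR e)%:R; set n := #|T|%:R.
  move=> _ H'; rewrite mulrBl mulrC; lra.
move=> D HD; exists (option (ordinal D) : finType), (@we D).
split; first exact: we_simple.
split; first exact: we_maxdeg.
rewrite (@we_maxdeg D HD) (@we_r D HD) (@we_rdR D HD) card_option card_ord.
have HDr : (D%:R : rat) != 0 by rewrite pnatr_eq0 -lt0n; lia.
rewrite -addn1 natrD; field; exact: HDr.
Qed.
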